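(* Let $T\in\mathcal{K}(V)$ with $\rho_S(T)\neq\emptyset$. For every intrinsic polynomial $P$, the operator $P(T)$ is closed.
   Context: Standing setting: either (a) $\mathbb{F}_0=\mathbb{F}=\mathbb{H}$, $V$ a two-sided quaternionic Banach space, $\mathcal{K}(V)$ the closed right linear operators on $V$ (defined on right subspaces); or (b) $\mathbb{F}=\mathbb{R}_n$ the real Clifford algebra generated by $e_1,\dots,e_n$, $\mathbb{F}_0=\mathbb{R}^{n+1}$ the paravectors $x_0+\sum x_ie_i$, $V=V_{\mathbb{R}}\otimes\mathbb{R}_n$ for a real Banach space $V_{\mathbb{R}}$, $\mathcal{K}(V)$ the operators of paravector type $T=T_0+\sum_{i=1}^nT_ie_i$ with closed $T_i$ on $V_{\mathbb{R}}$, defined on $\bigcap_i\operatorname{dom}(T_i)$. $\mathcal{B}(V)$ denotes the bounded everywhere defined such operators, $\mathcal{I}$ the identity; powers $T^k$ have the usual domains. For $s\in\mathbb{F}_0$, $\mathcal{Q}_s(T)=T^2-2\Re(s)T+|s|^2\mathcal{I}$ on $\operatorname{dom}(T^2)$, and $\rho_S(T)=\{s\in\mathbb{F}_0:\mathcal{Q}_s(T)^{-1}\in\mathcal{B}(V)\}$. An intrinsic polynomial is $P(s)=\sum_{k=0}^ma_ks^k$ with $a_k\in\mathbb{R}$, and $P(T)v:=\sum_{k=0}^ma_kT^kv$ for $v\in\operatorname{dom}(T^m)$. *)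

(* Defs.v *)
From mathcomp Require Import all_boot all_order all_algebra.
From mathcomp Require Import boolp classical_sets reals topology normedtype sequences.
Import GRing.Theory Num.Theory numFieldNormedType.Exports.

Set Implicit Arguments.
Unset Strict Implicit.
Unset Printing Implicit Defensive.

Local Open Scope classical_set_scope.
Local Open Scope ring_scope.

(* A partial operator is a pair (D, f) : domain D : set V, action f    *)
(* (f is only meaningful on D).                                        *)
Section PartialOps.
Variables (R : realType) (V : lmodType R).

Fixpoint powD (D : set V) (f : V -> V) (k : nat) : set V :=
  match k with
  | 0 => setT
  | k.+1 => [set v | D v /\ powD D f k (f v)]
  end.

Definition powf (f : V -> V) (k : nat) (v : V) : V := iter k f v.

(* Q_s(T) = T^2 - 2 Re(s) T + |s|^2 I on dom(T^2);
   it only depends on a = Re(s) and b = |s|^2. *)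
Definition QsD (D : set V) (f : V -> V) : set V := powD D f 2.
Definition Qsf (f : V -> V) (a b : R) (v : V) : V :=
  f (f v) - (2 * a) *: f v + b *: v.

Definition has_bounded_inverse (nrm : V -> R) (D : set V) (g : V -> V) :=
  exists (Rinv : V -> V) (C : R),
    (forall v, D (Rinv v) /\ g (Rinv v) = v) /\
    (forall v, D v -> Rinv (g v) = v) /\
    (forall v, nrm (Rinv v) <= C * nrm v).

(* intrinsic polynomial P(s) = sum_{k=0}^m a_k s^k with real a_k
   (m = degree of P) and P(T) v = sum_k a_k T^k v on dom(T^m). *)
Definition polyD (D : set V) (f : V -> V) (p : {poly R}) : set V :=
  powD D f (size p).-1.
Definition polyf (f : V -> V) (p : {poly R}) (v : V) : V :=
  \sum_(k < size p) p`_k *: powf f k v.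

Definition real_linear_op (D : set V) (f : V -> V) : Prop :=
  [/\ D 0,
      (forall x y, D x -> D y -> D (x + y)),
      (forall (c : R) x, D x -> D (c *: x)),
      (forall x y, D x -> D y -> f (x + y) = f x + f y) &
      (forall (c : R) x, D x -> f (c *: x) = c *: f x)].

(* graph closedness, stated sequentially w.r.t. a convergence notion cv *)
Definition seq_closed_op (cv : (nat -> V) -> V -> Prop)
    (D : set V) (f : V -> V) : Prop :=
  forall (u : nat -> V) (x y : V),
    (forall k, D (u k)) -> cv u x -> cv (f \o u) y -> D x /\ f x = y.

End PartialOps.

Definition ncv (R : realType) (V : normedModType R) (u : nat -> V) (x : V) :=
  u @ \oo --> x.

Record quat (R : Type) := Quat { q0 : R; q1 : R; q2 : R; q3 : R }.

Section Quaternions.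
Variable R : realType.

Definition qadd (a b : quat R) : quat R :=
  Quat (q0 a + q0 b) (q1 a + q1 b) (q2 a + q2 b) (q3 a + q3 b).

(* Hamilton product, i^2 = j^2 = k^2 = ijk = -1 *)
Definition qmul (a b : quat R) : quat R :=
  Quat (q0 a * q0 b - q1 a * q1 b - q2 a * q2 b - q3 a * q3 b)
       (q0 a * q1 b + q1 a * q0 b + q2 a * q3 b - q3 a * q2 b)
       (q0 a * q2 b - q1 a * q3 b + q2 a * q0 b + q3 a * q1 b)
       (q0 a * q3 b + q1 a * q2 b - q2 a * q1 b + q3 a * q0 b).

Definition qreal (r : R) : quat R := Quat r 0 0 0.

Definition qnorm2 (a : quat R) : R :=
  q0 a ^+ 2 + q1 a ^+ 2 + q2 a ^+ 2 + q3 a ^+ 2.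
Definition qnorm (a : quat R) : R := Num.sqrt (qnorm2 a).

(* V (a real Banach space) with left and right quaternionic scalar
   multiplications making it a two-sided quaternionic Banach space. *)
Definition two_sided_qBanach (V : completeNormedModType R)
    (lm : quat R -> V -> V) (rm : V -> quat R -> V) : Prop :=
  (forall a b v, lm (qadd a b) v = lm a v + lm b v) /\
  (forall a v w, lm a (v + w) = lm a v + lm a w) /\
  (forall a b v, lm (qmul a b) v = lm a (lm b v)) /\
  (forall (r : R) v, lm (qreal r) v = r *: v) /\
  (forall a b v, rm v (qadd a b) = rm v a + rm v b) /\
  (forall a v w, rm (v + w) a = rm v a + rm w a) /\
  (forall a b v, rm v (qmul a b) = rm (rm v a) b) /\
  (forall (r : R) v, rm v (qreal r) = r *: v) /\
  (forall a b v, rm (lm a v) b = lm a (rm v b)) /\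
  (forall a v, `|lm a v| = qnorm a * `|v|) /\
  (forall a v, `|rm v a| = qnorm a * `|v|).

Definition qK (V : completeNormedModType R) (rm : V -> quat R -> V)
    (D : set V) (f : V -> V) : Prop :=
  D 0 /\
  (forall x y, D x -> D y -> D (x + y)) /\
  (forall x a, D x -> D (rm x a)) /\
  (forall x y, D x -> D y -> f (x + y) = f x + f y) /\
  (forall x a, D x -> f (rm x a) = rm (f x) a) /\
  seq_closed_op (@ncv R V) D f.

Definition q_in_S_resolvent (V : completeNormedModType R)
    (D : set V) (f : V -> V) (s : quat R) : Prop :=
  has_bounded_inverse (fun v : V => `|v|) (QsD D f) (Qsf f (q0 s) (qnorm2 s)).

End Quaternions.

(* Setting (b): Clifford algebra R_n and V = V_R (x) R_n.             *)
(* Generators e_1..e_n are indexed by i : 'I_n, basis elements e_A by  *)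
(* A : {set 'I_n} (e_A = e_{a1}...e_{ak}, a1 < ... < ak).  An element  *)
(* v = sum_A v_A e_A of V is the function A |-> v_A.                   *)
Section Clifford.
Variables (R : realType) (n : nat) (VR : completeNormedModType R).

Local Notation cV := {ffun {set 'I_n} -> VR}.

Definition symd1 (A : {set 'I_n}) (i : 'I_n) : {set 'I_n} :=
  if i \in A then A :\ i else i |: A.

(* e_i e_A = csign i A * e_(symd1 A i)   (using e_i^2 = -1) *)
Definition csign (i : 'I_n) (A : {set 'I_n}) : R :=
  (-1) ^+ #|[set j in A | (j < i)%N]| * (if i \in A then -1 else 1).

(* paravector-type operator T = T_0 + sum_i T_i e_i, each T_j a closed
   real linear operator (DT j, fT j) on VR; index 0 of 'I_n.+1 is T_0,
   index (lift ord0 i) is the coefficient of the generator i : 'I_n. *)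
Definition paraD (DT : 'I_n.+1 -> set VR) : set cV :=
  [set v | forall A j, DT j (v A)].

(* T v = sum_A T_0 v_A e_A + sum_i sum_A T_i v_A e_i e_A *)
Definition paraF (fT : 'I_n.+1 -> VR -> VR) (v : cV) : cV :=
  [ffun B => fT ord0 (v B) +
    \sum_(i < n) csign i (symd1 B i) *: fT (lift ord0 i) (v (symd1 B i))].

(* a norm on V (all norms on V_R^(2^n) are equivalent) *)
Definition cnorm (v : cV) : R := \sum_(A : {set 'I_n}) `|v A|.

Definition ccv (u : nat -> cV) (x : cV) : Prop :=
  forall A, (fun k => u k A) @ \oo --> x A.

Definition cK (DT : 'I_n.+1 -> set VR) (fT : 'I_n.+1 -> VR -> VR) : Prop :=
  forall j, real_linear_op (DT j) (fT j) /\ seq_closed_op (@ncv R VR) (DT j) (fT j).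

(* s = s0 + sum_i s_i e_i in rho_S(T); Re(s) = s0, |s|^2 = s0^2 + sum s_i^2 *)
Definition c_in_S_resolvent (DT : 'I_n.+1 -> set VR) (fT : 'I_n.+1 -> VR -> VR)
    (s0 : R) (s : 'I_n -> R) : Prop :=
  @has_bounded_inverse R cV cnorm (QsD (paraD DT) (paraF fT))
    (Qsf (paraF fT) s0 (s0 ^+ 2 + \sum_(i < n) s i ^+ 2)).

End Clifford.

(* Main.v *)
Require Import Defs.
From mathcomp Require Import all_boot all_order all_algebra.
From mathcomp Require Import boolp classical_sets reals topology normedtype sequences.
From mathcomp Require Import zify ring lra.
Import Order.TTheory GRing.Theory Num.Theory numFieldNormedType.Exports.
Local Open Scope classical_set_scope.
Local Open Scope ring_scope.
Set Implicit Arguments.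
Unset Strict Implicit.
Unset Printing Implicit Defensive.
Section Alg.
Variables (R : realType) (V : lmodType R) (D : set V) (f : V -> V).
Hypothesis lin : real_linear_op D f.

Definition dom k v := forall i, (i < k)%N -> D (iter i f v).

Lemma powD_dom k v : powD D f k v <-> dom k v.
Proof.
elim: k v => [|k IH] v /=; first by split => // _ i.
split.
  move=> [Dv /IH H] [|i] //= Hi; rewrite -iterS iterSr; exact: H.
move=> H; split; first exact: (H 0%N).
by apply/IH => i Hi; rewrite -iterSr; apply: (H i.+1).
Qed.

Lemma dom_le k l v : (l <= k)%N -> dom k v -> dom l v.
Proof. by move=> lk H i il; apply: H; apply: leq_trans lk. Qed.

Lemma domS k v : dom k.+1 v <-> D v /\ dom k (f v).
Proof. by rewrite -!powD_dom. Qed.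

Lemma domS' j v : dom j v -> D (iter j f v) -> dom j.+1 v.
Proof. by move=> H Dj i; rewrite ltnS leq_eqVlt => /orP[/eqP->|] //; apply: H. Qed.

Lemma lin0 : D 0. Proof. by case: lin. Qed.
Lemma linD x y : D x -> D y -> D (x + y). Proof. by case: lin => _ H _ _ _; apply: H. Qed.
Lemma linZ (c : R) x : D x -> D (c *: x). Proof. by case: lin => _ _ H _ _; apply: H. Qed.
Lemma linfD x y : D x -> D y -> f (x + y) = f x + f y. Proof. by case: lin => _ _ _ H _; apply: H. Qed.
Lemma linfZ (c : R) x : D x -> f (c *: x) = c *: f x. Proof. by case: lin => _ _ _ _ H; apply: H. Qed.
Lemma linN x : D x -> D (- x). Proof. by move=> Dx; have := linZ (-1) Dx; rewrite scaleN1r. Qed.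
Lemma linB x y : D x -> D y -> D (x - y). Proof. by move=> *; apply: linD => //; apply: linN. Qed.
Lemma linfN x : D x -> f (- x) = - f x. Proof. by move=> Dx; have := linfZ (-1) Dx; rewrite !scaleN1r. Qed.
Lemma linfB x y : D x -> D y -> f (x - y) = f x - f y.
Proof. by move=> Dx Dy; rewrite linfD ?linfN //; apply: linN. Qed.
Lemma linf0 : f 0 = 0.
Proof. by rewrite -(scale0r 0) linfZ ?scale0r //; apply: lin0. Qed.

Lemma lin_sum N (c : 'I_N -> R) (w : 'I_N -> V) :
  (forall i, D (w i)) ->
  D (\sum_(i < N) c i *: w i) /\ f (\sum_(i < N) c i *: w i) = \sum_(i < N) c i *: f (w i).
Proof.
elim: N c w => [|N IH] c w Dw; first by rewrite !big_ord0; split; [apply: lin0|apply: linf0].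
rewrite !big_ord_recr /=.
have [D1 f1] := IH (fun i => c (widen_ord (leqnSn N) i)) (fun i => w (widen_ord (leqnSn N) i)) (fun i => Dw _).
split; first by apply: linD => //; apply: linZ.
by rewrite linfD ?f1 ?linfZ //; apply: linZ.
Qed.

Lemma polyfE N (p : {poly R}) v : (size p <= N)%N ->
  polyf f p v = \sum_(k < N) p`_k *: iter k f v.
Proof.
move=> sN; rewrite /polyf /powf (big_ord_widen N (fun k => p`_k *: iter k f v) sN).
rewrite big_mkcond /=; apply: eq_bigr => i _.
by case: ifP => // /negbT; rewrite -leqNgt => H; rewrite nth_default // scale0r.
Qed.

Lemma polyfD (p q : {poly R}) v : polyf f (p + q) v = polyf f p v + polyf f q v.
Proof.
rewrite (polyfE (N := maxn (size p) (size q))) ?size_polyD //.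
rewrite (@polyfE (maxn (size p) (size q)) p v (leq_maxl _ _)).
rewrite (@polyfE (maxn (size p) (size q)) q v (leq_maxr _ _)).
by rewrite -big_split /=; apply: eq_bigr => i _; rewrite coefD scalerDl.
Qed.

Lemma polyfZ c (q : {poly R}) v : polyf f (c *: q) v = c *: polyf f q v.
Proof.
rewrite (polyfE (N := size q)) ?size_scale_leq // /polyf scaler_sumr.
by apply: eq_bigr => i _; rewrite coefZ scalerA.
Qed.

Lemma polyfC c v : polyf f c%:P v = c *: v.
Proof.
rewrite (polyfE (N := 1)) ?size_polyC ?leq_b1 // big_ord1 coefC /=.
by [].
Qed.

Lemma polyf0 v : polyf f 0 v = 0.
Proof. by rewrite /polyf size_poly0 big_ord0. Qed.

Lemma polyfMX (p : {poly R}) v : polyf f (p * 'X) v = polyf f p (f v).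
Proof.
have [->|nz] := eqVneq p 0; first by rewrite mul0r !polyf0.
rewrite /polyf size_mulX // big_ord_recl coefMX eqxx scale0r add0r /powf.
by apply: eq_bigr => i _; rewrite /bump /= coefMX /= add0n -iterS iterSr.
Qed.

Lemma polyfXM (q : {poly R}) u : dom (size q) u ->
  D (polyf f q u) /\ f (polyf f q u) = polyf f ('X * q) u.
Proof.
move=> Hd.
have [H1 H2] := @lin_sum (size q) (fun i => q`_i) (fun i => iter i f u) (fun i => Hd i (ltn_ord i)).
split; first exact: H1.
rewrite /polyf /powf H2 -/(polyf f ('X * q) u) mulrC polyfMX /polyf /powf.
by apply: eq_bigr => i _; rewrite -iterS iterSr.
Qed.

Lemma size_Xq_le (q : {poly R}) : (size ('X * q)%R <= (size q).+1)%N.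
Proof.
have [->|nz] := eqVneq q 0; first by rewrite mulr0 size_poly0.
by rewrite mulrC size_mulX.
Qed.

Lemma aux_le1 (x y z : nat) : (0 < x)%N -> (y <= z.+1)%N -> ((x + y).-2 <= (x + z).-1)%N.
Proof. rewrite -!subn1; lia. Qed.
Lemma aux_le2 (x z : nat) : (0 < x)%N -> (z <= (x + z).-1)%N.
Proof. rewrite -!subn1; lia. Qed.

Lemma polyfM (p q : {poly R}) u : dom (size p + size q).-2 u ->
  polyf f (p * q) u = polyf f p (polyf f q u).
Proof.
elim/poly_ind: p q u => [|p c IH] q u Hd; first by rewrite mul0r !polyf0.
have [->|nz] := eqVneq p 0.
  by rewrite mul0r add0r mul_polyC polyfZ polyfC.
have sp0 : (0 < size p)%N by rewrite size_poly_gt0.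
move: Hd; rewrite size_MXaddC (negbTE nz) /= => Hd.
rewrite mulrDl -mulrA mul_polyC polyfD polyfZ IH; last first.
  by apply: dom_le Hd; apply: aux_le1 => //; apply: size_Xq_le.
have Hq : dom (size q) u by apply: dom_le Hd; apply: aux_le2.
rewrite -(proj2 (polyfXM Hq)) polyfD polyfMX polyfC.
by [].
Qed.
End Alg.

Section Res.
Variables (R : realType) (V : lmodType R) (D : set V) (f : V -> V).
Hypothesis lin : real_linear_op D f.
Variables (Rv : V -> V) (a b : R).
Hypothesis Rdom : forall v, QsD D f (Rv v).
Hypothesis RQ : forall v, Qsf f a b (Rv v) = v.
Hypothesis QR : forall v, QsD D f v -> Rv (Qsf f a b v) = v.

Lemma Rdom2 v : dom D f 2 (Rv v).
Proof. by apply/powD_dom; apply: Rdom. Qed.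
Lemma RD v : D (Rv v). Proof. exact: (Rdom2 v (isT : (0 < 2)%N)). Qed.
Lemma RfD v : D (f (Rv v)). Proof. exact: (Rdom2 v (isT : (1 < 2)%N)). Qed.

Lemma ffR v : f (f (Rv v)) = v + (2 * a) *: f (Rv v) - b *: Rv v.
Proof. have := RQ v; rewrite /Qsf => {2}<-; by rewrite [_ - _ + _ + _]addrAC subrK addrK. Qed.

Lemma dom2_add x y : dom D f 2 x -> dom D f 2 y -> dom D f 2 (x + y).
Proof.
move=> Hx Hy [|[|i]] //= _.
  by apply: (linD lin); [apply: (Hx 0%N)|apply: (Hy 0%N)].
rewrite (linfD lin); [|exact: (Hx 0%N)|exact: (Hy 0%N)].
by apply: (linD lin); [apply: (Hx 1%N)|apply: (Hy 1%N)].
Qed.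

Lemma dom2_scale c x : dom D f 2 x -> dom D f 2 (c *: x).
Proof.
move=> Hx [|[|i]] //= _; first by apply: (linZ lin); apply: (Hx 0%N).
rewrite (linfZ lin); last exact: (Hx 0%N).
by apply: (linZ lin); apply: (Hx 1%N).
Qed.

Lemma acl (A B C E F G : V) : (A + B) - (C + E) + (F + G) = (A - C + F) + (B - E + G).
Proof. by rewrite opprD [A + B + _]addrACA [_ + (F + G)]addrACA. Qed.

Lemma Qs_add x y : dom D f 2 x -> dom D f 2 y -> Qsf f a b (x + y) = Qsf f a b x + Qsf f a b y.
Proof.
move=> Hx Hy; have D0x := Hx 0%N isT; have D1x := Hx 1%N isT; have D0y := Hy 0%N isT; have D1y := Hy 1%N isT.
rewrite /= in D1x D1y.
rewrite /Qsf (linfD lin D0x D0y) (linfD lin D1x D1y).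
by rewrite /= !scalerDr acl.
Qed.

Lemma Qs_scale c x : dom D f 2 x -> Qsf f a b (c *: x) = c *: Qsf f a b x.
Proof.
move=> Hx; have D0x := Hx 0%N isT; have D1x := Hx 1%N isT; rewrite /= in D0x D1x.
rewrite /Qsf (linfZ lin c D0x) (linfZ lin c D1x) !scalerDr scalerN !scalerA.
by rewrite [c * (2 * a)]mulrC [c * b]mulrC.
Qed.

Lemma QR' v : dom D f 2 v -> Rv (Qsf f a b v) = v.
Proof. by move=> H; apply: QR; apply/powD_dom. Qed.

Lemma R_add x y : Rv (x + y) = Rv x + Rv y.
Proof.
have H : Qsf f a b (Rv x + Rv y) = x + y by rewrite Qs_add ?RQ //; apply: Rdom2.
by rewrite -H QR' //; apply: dom2_add; apply: Rdom2.
Qed.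

Lemma R_scale c x : Rv (c *: x) = c *: Rv x.
Proof.
have H : Qsf f a b (c *: Rv x) = c *: x by rewrite Qs_scale ?RQ //; apply: Rdom2.
by rewrite -H QR' //; apply: dom2_scale; apply: Rdom2.
Qed.

Lemma R0 : Rv 0 = 0.
Proof. by have := R_scale 0 0; rewrite !scale0r. Qed.

Lemma R_sum N (c : 'I_N -> R) (w : 'I_N -> V) :
  Rv (\sum_(i < N) c i *: w i) = \sum_(i < N) c i *: Rv (w i).
Proof.
elim: N c w => [|N IH] c w; first by rewrite !big_ord0 R0.
by rewrite !big_ord_recr /= R_add R_scale IH.
Qed.

Lemma R_comm v : D v -> Rv (f v) = f (Rv v).
Proof.
move=> Dv.
have D0 := RD v; have D1 := RfD v.
have D2 : D (f (f (Rv v))).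
  rewrite ffR; apply: (linB lin); first apply: (linD lin) => //.
  - by apply: (linZ lin).
  - by apply: (linZ lin).
have Hw : dom D f 2 (f (Rv v)) by move=> [|[|i]] //= _.
have E : Qsf f a b (f (Rv v)) = f v.
  rewrite -{2}(RQ v) /Qsf.
  have Da : D (f (f (Rv v)) - (2 * a) *: f (Rv v)) by apply: (linB lin) => //; apply: (linZ lin).
  rewrite (linfD lin Da (linZ lin b D0)) (linfB lin D2 (linZ lin _ D1)).
  by rewrite (linfZ lin _ D1) (linfZ lin _ D0).
by rewrite -E QR'.
Qed.

Lemma R_iter k v : dom D f k v -> Rv (iter k f v) = iter k f (Rv v).
Proof.
elim: k => [|k IH] Hd //=.
rewrite R_comm; last exact: Hd.
by rewrite IH //; apply: dom_le Hd.
Qed.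

Lemma R_polyf (p : {poly R}) v : dom D f (size p).-1 v -> Rv (polyf f p v) = polyf f p (Rv v).
Proof.
move=> Hd; rewrite /polyf R_sum; apply: eq_bigr => i _; congr (_ *: _).
rewrite /powf R_iter //; apply: dom_le Hd.
by case: (size p) i => [[]|s] // [i /= Hi].
Qed.

End Res.

Section DomLin.
Variables (R : realType) (V : lmodType R) (D : set V) (f : V -> V).
Hypothesis lin : real_linear_op D f.

Lemma dom_add k x y : dom D f k x -> dom D f k y -> dom D f k (x + y).
Proof.
elim: k x y => [|k IH] x y Hx Hy; first by move=> i.
move/domS: Hx => [Dx Hx]; move/domS: Hy => [Dy Hy].
apply/domS; split; first exact: (linD lin).
by rewrite (linfD lin) //; apply: IH.
Qed.

Lemma dom_scale k c x : dom D f k x -> dom D f k (c *: x).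
Proof.
elim: k x => [|k IH] x Hx; first by move=> i.
move/domS: Hx => [Dx Hx].
apply/domS; split; first exact: (linZ lin).
by rewrite (linfZ lin) //; apply: IH.
Qed.

Lemma dom_Qs k a b u : dom D f k.+2 u -> dom D f k (Qsf f a b u).
Proof.
move=> H; have H1 : dom D f k.+1 (f u) by case/domS: H.
have H2 : dom D f k (f (f u)) by case/domS: H1.
rewrite /Qsf; apply: dom_add; last by apply: dom_scale; apply: (dom_le (leqW (leqnSn k)) H).
apply: dom_add => //; rewrite -scaleN1r; apply: dom_scale.
by apply: dom_scale; apply: (dom_le (leqnSn k) H1).
Qed.
End DomLin.

Section Conv.
Variables (R : realType) (V : lmodType R).
Variable cv : (nat -> V) -> V -> Prop.
Hypothesis cv_add : forall u w x y, cv u x -> cv w y -> cv (fun k => u k + w k) (x + y).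
Hypothesis cv_scale : forall u x (c : R), cv u x -> cv (fun k => c *: u k) (c *: x).
Hypothesis cv_uniq : forall u x y, cv u x -> cv u y -> x = y.
Hypothesis cv_cst0 : cv (fun _ => 0) 0.

Variables (D : set V) (f : V -> V).
Hypothesis lin : real_linear_op D f.
Variables (Rv : V -> V) (a b : R).
Hypothesis Rdom : forall v, QsD D f (Rv v).
Hypothesis RQ : forall v, Qsf f a b (Rv v) = v.
Hypothesis QR : forall v, QsD D f v -> Rv (Qsf f a b v) = v.
Hypothesis Rcont : forall u x, cv u x -> cv (fun k => Rv (u k)) (Rv x).
Hypothesis Scont : forall u x, cv u x -> cv (fun k => f (Rv (u k))) (f (Rv x)).

Lemma cv_sub u w x y : cv u x -> cv w y -> cv (fun k => u k - w k) (x - y).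
Proof.
move=> Hu Hw; have := cv_add Hu (cv_scale (-1) Hw).
by rewrite scaleN1r; under eq_fun do rewrite scaleN1r.
Qed.

Lemma cv_sum N (c : 'I_N -> R) (w : 'I_N -> nat -> V) (l : 'I_N -> V) :
  (forall i, cv (w i) (l i)) ->
  cv (fun k => \sum_(i < N) c i *: w i k) (\sum_(i < N) c i *: l i).
Proof.
elim: N c w l => [|N IH] c w l H.
  by rewrite big_ord0; under eq_fun do rewrite big_ord0.
rewrite big_ord_recr /=; under eq_fun do rewrite big_ord_recr /=.
apply: cv_add; first by apply: IH => i; apply: H.
exact: cv_scale.
Qed.

Lemma ac2 (y A B : V) : y + A - B - A + B = y.
Proof. by rewrite [y + _ - _ - _]addrAC addrK subrK. Qed.

Definition cvx u := exists x, cv u x.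

Lemma T_closed : seq_closed_op cv D f.
Proof.
move=> u x y Du Hx Hy.
have E1 : (fun k => Rv (f (u k))) = (fun k => f (Rv (u k))).
  by apply: funext => k; apply: (R_comm lin Rdom RQ QR (Du k)).
have H1 := Rcont Hy; rewrite /= E1 in H1.
have Sx : f (Rv x) = Rv y by apply: cv_uniq (Scont Hx) H1.
have Ex : x = f (Rv y) - (2 * a) *: Rv y + b *: Rv x.
  by rewrite -Sx -{1}(RQ x).
have DRy := RD Rdom y; have DfRy := RfD Rdom y; have DRx := RD Rdom x.
have DfRx := RfD Rdom x.
split.
  rewrite Ex; apply: (linD lin); last exact: (linZ lin).
  by apply: (linB lin) => //; apply: (linZ lin).
rewrite Ex (linfD lin) ?(linfB lin) ?(linfZ lin) //; first last.
- exact: (linZ lin).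
- by apply: (linB lin) => //; apply: (linZ lin).
- exact: (linZ lin).
rewrite (ffR RQ) Sx.
by rewrite ac2.
Qed.

Definition Qp : {poly R} := Poly [:: b; -(2 * a); 1].

Lemma sizeQp : size Qp = 3.
Proof. by rewrite /Qp (@PolyK _ 0) //= oner_neq0. Qed.

Lemma Qp_nz : Qp != 0.
Proof. by rewrite -size_poly_eq0 sizeQp. Qed.

Lemma polyf_Qp v : polyf f Qp v = Qsf f a b v.
Proof.
rewrite /polyf sizeQp !big_ord_recr big_ord0 /= !coef_Poly /= /powf /= add0r scale1r.
by rewrite /Qsf scaleNr addrAC [RHS]addrC addrA.
Qed.

Lemma polyf_small (r : {poly R}) v : (size r <= 2)%N -> polyf f r v = r`_0 *: v + r`_1 *: f v.
Proof.
move=> H; rewrite (@polyfE _ _ f 2 r v H) !big_ord_recr big_ord0 /= add0r.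
by [].
Qed.

Lemma red_eq (P : {poly R}) m v : size P = m.+1 -> (2 <= m)%N -> dom D f m v ->
  f (Rv (polyf f P v)) =
  polyf f ('X * (P %/ Qp)) v + (P %% Qp)`_0 *: f (Rv v)
   + (P %% Qp)`_1 *: (v + (2 * a) *: f (Rv v) - b *: Rv v).
Proof.
move=> sP m2 Hv.
set P1 := P %/ Qp; set r := P %% Qp.
have sP1 : size P1 = m.-1 by rewrite /P1 size_divp ?Qp_nz // sizeQp sP; rewrite -!subn1; lia.
have sr : (size r <= 2)%N by have := ltn_modp P Qp; rewrite Qp_nz sizeQp.
have Dv : D v by apply: (Hv 0%N); lia.
have Dfv : dom D f 2 v by apply: (dom_le _ Hv).
have HP : polyf f P v = polyf f P1 (Qsf f a b v) + (r`_0 *: v + r`_1 *: f v).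
  rewrite {1}(divp_eq P Qp) polyfD -/P1 -/r (polyf_small v sr) (polyfM lin) ?polyf_Qp //.
  by rewrite sP1 sizeQp; apply: (dom_le _ Hv); rewrite -!subn1; lia.
have DQ : dom D f (size P1).-1 (Qsf f a b v).
  rewrite sP1; apply: (dom_Qs lin); apply: (dom_le _ Hv); rewrite -!subn1; lia.
have HR : Rv (polyf f P v) = polyf f P1 v + (r`_0 *: Rv v + r`_1 *: f (Rv v)).
  rewrite HP (R_add lin Rdom RQ QR) (R_polyf lin Rdom RQ QR DQ) (QR' QR Dfv).
  by rewrite (R_add lin Rdom RQ QR) !(R_scale lin Rdom RQ QR) (R_comm lin Rdom RQ QR Dv).
have DP1 : dom D f (size P1) v by rewrite sP1; apply: (dom_le _ Hv); rewrite -!subn1; lia.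
have [DpP1 fP1] := polyfXM lin DP1.
have DRv := RD Rdom v; have DfRv := RfD Rdom v.
rewrite HR (linfD lin) //; last by apply: (linD lin); apply: (linZ lin).
rewrite (linfD lin) ?(linfZ lin) //; try by apply: (linZ lin).
by rewrite fP1 (ffR RQ) addrA.
Qed.

Lemma conv_all m : forall (P : {poly R}) (u : nat -> V), size P = m.+1 ->
  (forall k, dom D f m (u k)) -> cvx u -> cvx (fun k => polyf f P (u k)) ->
  forall j, (j <= m)%N -> cvx (fun k => iter j f (u k)).
Proof.
elim/ltn_ind: m => m IH P u sP Du [x cu] [y cP].
have low : forall j, (j < m)%N -> cvx (fun k => iter j f (u k)).
  have [m2|m2] := ltnP m 2.
    move=> j jm; have -> : j = 0%N by move: jm m2; lia.
    by exists x.
  set P1 := P %/ Qp; set r := P %% Qp.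
  have sP1 : size P1 = m.-1 by rewrite /P1 size_divp ?Qp_nz // sizeQp sP; rewrite -!subn1; lia.
  have P1nz : P1 != 0 by rewrite -size_poly_eq0 sP1; rewrite -!subn1; lia.
  have sXP1 : size ('X * P1) = (m.-1).+1 by rewrite mulrC size_mulX // sP1.
  have cX : cvx (fun k => polyf f ('X * P1) (u k)).
    eexists.
    have E : (fun k => polyf f ('X * P1) (u k)) = (fun k =>
      f (Rv (polyf f P (u k))) - r`_0 *: f (Rv (u k))
      - r`_1 *: (u k + (2 * a) *: f (Rv (u k)) - b *: Rv (u k))).
      apply: funext => k; rewrite (red_eq sP m2 (Du k)) -/P1 -/r.
      by rewrite [_ + _ + _ - _]addrAC addrK addrK.
    rewrite E; apply: cv_sub; first apply: cv_sub.
    - exact: Scont cP.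
    - exact: cv_scale (Scont cu).
    apply: cv_scale; apply: cv_sub; first apply: cv_add.
    - exact: cu.
    - exact: cv_scale (Scont cu).
    exact: cv_scale (Rcont cu).
  move=> j jm.
  apply: (IH m.-1 _ ('X * P1)) => //.
  - by rewrite -!subn1; lia.
  - by move=> k; apply: (dom_le _ (Du k)); rewrite -!subn1; lia.
  - by exists x.
  - by rewrite -!subn1; lia.
move=> j; rewrite leq_eqVlt => /orP[/eqP ->|]; last exact: low.
have [l Hl] := choice (fun i : 'I_m => low i (ltn_ord i)).
have Pm : P`_m != 0.
  have : lead_coef P != 0 by rewrite lead_coef_eq0 -size_poly_eq0 sP.
  by rewrite lead_coefE sP.
exists ((P`_m)^-1 *: (y - \sum_(i < m) P`_i *: l i)).
have E : (fun k => iter m f (u k)) =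
  (fun k => (P`_m)^-1 *: (polyf f P (u k) - \sum_(i < m) P`_i *: iter i f (u k))).
  apply: funext => k; rewrite /polyf sP big_ord_recr /= /powf addrC addrK.
  by rewrite scalerA mulVf // scale1r.
rewrite E; apply: cv_scale; apply: cv_sub => //.
by apply: cv_sum.
Qed.

Theorem core_closed (P : {poly R}) : seq_closed_op cv (polyD D f P) (polyf f P).
Proof.
move=> u x y Du cu cP.
have [P0|Pnz] := eqVneq P 0.
  subst P.
  have E : (polyf f 0 \o u) = (fun _ => 0) by apply: funext => k; rewrite /= polyf0.
  rewrite E in cP; rewrite /polyD size_poly0 polyf0; split => //.
  exact: cv_uniq cv_cst0 cP.
have [m sP] : exists m, size P = m.+1.
  by exists (size P).-1; rewrite prednK // size_poly_gt0.
have Dm : forall k, dom D f m (u k) by move=> k; apply/powD_dom; move: (Du k); rewrite /polyD sP.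
have CA := conv_all sP Dm (ex_intro _ x cu) (ex_intro _ y cP).
have step : forall j, (j <= m)%N -> dom D f j x /\ cv (fun k => iter j f (u k)) (iter j f x).
  elim=> [|j IHj] jm; first by split => //; move=> i.
  have [Dj cj] := IHj (ltnW jm).
  have [z cz] := CA j.+1 jm.
  have Dju : forall k, D (iter j f (u k)) by move=> k; apply: (Dm k).
  have [Dx fx] := T_closed Dju cj cz.
  split; first by apply: domS'.
  by rewrite iterS fx.
have [Dx cx] := step m (leqnn m).
split; first by rewrite /polyD sP; apply/powD_dom.
have E : (polyf f P \o u) = (fun k => \sum_(i < m.+1) P`_i *: iter i f (u k)).
  by apply: funext => k; rewrite /= /polyf sP.
rewrite E in cP.
have := cv_sum (fun i : 'I_m.+1 => P`_i) (fun i => (step i (ltn_ord i)).2).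
move=> H; rewrite (cv_uniq cP H) /polyf sP.
by [].
Qed.

End Conv.

Section CGT.
Variables (R : realType) (U : completeNormedModType R) (g : U -> U).
Hypothesis gD : forall x y, g (x + y) = g x + g y.
Hypothesis gZ : forall (c : R) x, g (c *: x) = c *: g x.
Hypothesis gcl : forall (u : nat -> U) x y, u @ \oo --> x -> (g \o u) @ \oo --> y -> g x = y.

Lemma g0 : g 0 = 0.
Proof. by have := gZ 0 0; rewrite !scale0r. Qed.
Lemma gN x : g (- x) = - g x.
Proof. by have := gZ (-1) x; rewrite !scaleN1r. Qed.
Lemma gB x y : g (x - y) = g x - g y.
Proof. by rewrite gD gN. Qed.

Lemma ac3 (x0 z a1 a2 : U) : (x0 + z - a1) - (x0 - a2) = z - (a1 - a2).
Proof. by rewrite opprB addrC !addrA subrK [_ + z]addrC -addrA opprB. Qed.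

Let A (i : nat) := [set x : U | `|g x| <= i%:R].

Lemma closure_approx (S : set U) p (e : R) : closure S p -> 0 < e -> exists a, S a /\ `|p - a| < e.
Proof.
move=> Hp e0; have [a [Sa Ba]] := Hp _ (nbhsx_ballx p _ e0).
by exists a; split => //; move: Ba; rewrite -ball_normE.
Qed.

Lemma cgt_step1 : exists (i : nat) (x0 : U) (r : R), 0 < r /\
  forall z, `|z| < r -> closure (A i) (x0 + z).
Proof.
have [[i Hi]|H] := pselect (exists i, ~ dense (~` closure (A i))); last first.
  have Hd : forall i, open (~` closure (A i)) /\ dense (~` closure (A i)).
    move=> i; split; first by apply: closed_openC; apply: closed_closure.
    by apply: contrapT => Hi; apply: H; exists i.
  have B := Baire Hd.
  have [z [_ Hz]] := B setT (ex_intro _ 0 I) openT.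
  exfalso; apply: (Hz (Num.truncn `|g z|).+1 I); apply: subset_closure.
  by rewrite /A /=; apply: ltW; apply: truncnS_gt.
have [O [[x0 Ox0] OF]] := denseNE Hi.
have /nbhs_ballP [r r0 Hr] := open_nbhs_nbhs Ox0.
exists i, x0, r; split => // z zr.
have : O (x0 + z) by apply: Hr; rewrite -ball_normE /= opprD addrA subrr sub0r normrN.
move=> Oz; apply: contrapT => Nz.
have : (O `&` ~` closure (A i)) (x0 + z) by split.
by rewrite OF.
Qed.
Lemma cgt_step2 : exists M : R, 0 <= M /\
  forall y, exists x, `|y - x| <= `|y| / 2 /\ `|g x| <= M * `|y|.
Proof.
have [i [x0 [r [r0 Hr]]]] := cgt_step1.
exists (4 * i%:R / r); split; first by apply: divr_ge0; [apply: mulr_ge0|apply: ltW].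
move=> y; have [->|ynz] := eqVneq y 0.
  by exists 0; rewrite subr0 normr0 mul0r g0 normr0 mulr0.
set ny := `|y|; have ny0 : 0 < ny by rewrite normr_gt0.
set t := r / (2 * ny).
have t0 : 0 < t by apply: divr_gt0 => //; apply: mulr_gt0.
have tny : t * ny = r / 2 by rewrite /t; field; apply/negP => /eqP H; move: ny0; rewrite H ltxx.
set z := t *: y.
have nz : `|z| = r / 2 by rewrite normrZ gtr0_norm.
have zr : `|z| < r by rewrite nz; lra.
have C1 := Hr z zr.
have C0 : closure (A i) x0 by have := Hr 0; rewrite normr0 addr0; apply.
have e0 : 0 < r / 8 by lra.
have [a1 [A1 H1]] := closure_approx C1 e0.
have [a2 [A2 H2]] := closure_approx C0 e0.
have tinv : t^-1 = 2 * ny / r by rewrite /t invf_div mulrC.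
have tnz : t != 0 by rewrite gt_eqF.
exists (t^-1 *: (a1 - a2)); split.
  have E : y - t^-1 *: (a1 - a2) = t^-1 *: ((x0 + z - a1) - (x0 - a2)).
    by rewrite ac3 [RHS]scalerBr /z scalerA mulVf // scale1r.
  rewrite E normrZ gtr0_norm ?invr_gt0 // tinv.
  have Hn : `|x0 + z - a1 - (x0 - a2)| <= r / 4.
    by apply: le_trans (ler_normB _ _) _; lra.
  have -> : ny / 2 = 2 * ny / r * (r / 4) by field; apply/negP => /eqP H; move: r0; rewrite H ltxx.
  by apply: ler_wpM2l => //; apply: divr_ge0; [apply: mulr_ge0 => //; apply: ltW|apply: ltW].
rewrite gZ gB normrZ gtr0_norm ?invr_gt0 // tinv.
have Hg : `|g a1 - g a2| <= i%:R + i%:R by apply: le_trans (ler_normB _ _) _; apply: lerD.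
apply: le_trans (ler_wpM2l _ Hg) _.
  by apply: divr_ge0; [apply: mulr_ge0 => //; apply: ltW|apply: ltW].
by rewrite le_eqVlt; apply/orP; left; apply/eqP; field; apply/negP => /eqP H; move: r0; rewrite H ltxx.
Qed.
Lemma series0' (u : U ^nat) : series u 0 = 0.
Proof. by rewrite seriesEord /= big_ord0. Qed.

Theorem CGT : exists M : R, forall x, `|g x| <= M * `|x|.
Proof.
have [M [M0 HM]] := cgt_step2.
have [h Hh] := choice HM.
exists (2 * M) => y.
pose q : R := 2^-1.
have q0 : 0 <= q by rewrite /q invr_ge0.
have q1 : `|q| < 1 by rewrite ger0_norm // /q invf_lt1 // ltr1n.
pose ys n := iter n (fun v => v - h v) y.
have ysS n : ys n.+1 = ys n - h (ys n) by [].
have ysb n : `|ys n| <= q ^+ n * `|y|.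
  elim: n => [|n IH]; first by rewrite expr0 mul1r.
  rewrite ysS; apply: le_trans (Hh (ys n)).1 _.
  by rewrite exprS -mulrA mulrC /q; apply: ler_wpM2l.
pose w n := h (ys n).
have sE n : series w n = y - ys n.
  elim: n => [|n IH]; first by rewrite series0' subrr.
  by rewrite seriesSr IH ysS opprB addrA [y - _ + _]addrAC.
have cys : ys @ \oo --> 0.
  apply/cvgr0Pnorm_le => e e0.
  have Hg := cvg_geometric (`|y|) q1.
  have := cvgr0_norm_le (geometric `|y| q) Hg _ e0.
  move=> HG; near=> n.
  apply: le_trans (ysb n) _.
  have Hn : `|geometric `|y| q n| <= e by near: n; exact: HG.
  by apply: le_trans Hn; rewrite mulrC; apply: ler_norm.
have cs : series w @ \oo --> y.
  have -> : series w = (fun n => y - ys n) by apply: funext => n; apply: sE.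
  by rewrite -[X in _ --> X]subr0; apply: cvgB => //; apply: cvg_cst.
pose wg n := g (w n).
have gser n : g (series w n) = series wg n.
  elim: n => [|n IH]; first by rewrite !series0' g0.
  by rewrite !seriesSr gD IH.
have wgb n : `|wg n| <= geometric (M * `|y|) q n.
  rewrite /wg /w /=; apply: le_trans (Hh (ys n)).2 _.
  by rewrite /= -mulrA [`|y| * _]mulrC; apply: ler_wpM2l.
have cw : cvgn (series wg).
  apply: normed_cvg; apply: (@series_le_cvg _ _ (geometric (M * `|y|) q)).
  - by move=> n; apply: normr_ge0.
  - by move=> n; apply: geometric_ge0 => //; apply: mulr_ge0.
  - exact: wgb.
  - exact: is_cvg_geometric_series.
move/cvg_ex: cw => [z cz].
have gy : g y = z.
  apply: (gcl cs); have -> : g \o series w = series wg by apply: funext => n; apply: gser.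
  exact: cz.
have sb n : `|series wg n| <= 2 * M * `|y| * (1 - q ^+ n).
  elim: n => [|n IH]; first by rewrite series0' normr0 expr0 subrr mulr0.
  rewrite seriesSr; apply: le_trans (ler_normD _ _) _.
  apply: le_trans (lerD IH (wgb n)) _; rewrite /= exprS.
  by rewrite le_eqVlt; apply/orP; left; apply/eqP; rewrite /q; field.
have sb2 : forall n, `|series wg n| <= 2 * M * `|y|.
  move=> n.
  apply: le_trans (sb n) _; rewrite -[X in _ <= X]mulr1; apply: ler_wpM2l.
    by apply: mulr_ge0 => //; apply: mulr_ge0.
  by rewrite lerBlDr lerDl; apply: exprn_ge0.
rewrite gy.
have Hn : \forall n \near \oo, `|series wg n| <= 2 * M * `|y| by apply: nearW.
have Hcl : closed [set x : R | x <= 2 * M * `|y|] by apply: closed_le.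
have Hz := cvg_norm cz.
have := (@closed_cvg _ _ \oo eventually_filter (fun n => `|series wg n|) _ Hcl Hn).
by move=> H; apply: H; apply: Hz.
Unshelve. all: by end_near.
Qed.
End CGT.

Section NormedHelp.
Variables (R : realType) (W : normedModType R).

Lemma ncv_add (u w : nat -> W) (x y : W) : u @ \oo --> x -> w @ \oo --> y ->
  (fun k => u k + w k) @ \oo --> x + y.
Proof. by move=> Hu Hw; apply: cvgD. Qed.

Lemma ncv_scale (u : nat -> W) (x : W) (c : R) : u @ \oo --> x ->
  (fun k => c *: u k) @ \oo --> c *: x.
Proof. by move=> Hu; apply: cvgZl_tmp. Qed.

Lemma ncv_uniq (u : nat -> W) (x y : W) : u @ \oo --> x -> u @ \oo --> y -> x = y.
Proof. by move=> Hx Hy; apply: (@cvg_unique _ (@norm_hausdorff _ W) (u @ \oo) _ x y Hx Hy). Qed.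

Lemma ncv_cst0 : (fun _ : nat => (0 : W)) @ \oo --> 0.
Proof. exact: cvg_cst. Qed.

Lemma ncv_dist0 (u : nat -> W) (x : W) : u @ \oo --> x -> (fun k => `|x - u k|) @ \oo --> (0 : R).
Proof.
move=> Hu; have H := cvg_norm (cvgB (cvg_cst x) Hu).
by rewrite subrr normr0 in H; apply: H.
Qed.

Lemma bound_cvg (a : nat -> W) (l : W) (e : nat -> R) (C : R) :
  e @ \oo --> (0 : R) -> (forall k, `|l - a k| <= C * e k) -> a @ \oo --> l.
Proof.
move=> He Hb; apply/cvgrPdist_le => eps eps0.
have HCe : (fun k => C * e k) @ \oo --> (0 : R).
  by have := cvgZl_tmp (k := C) He; rewrite scaler0; apply.
have := cvgr0_norm_le (fun k => C * e k) HCe _ eps0.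
move=> HG; near=> k.
have Hk : `|C * e k| <= eps by near: k; exact: HG.
by apply: le_trans (Hb k) _; apply: le_trans Hk; apply: ler_norm.
Unshelve. all: by end_near.
Qed.

Lemma lin_bound_cont (h : W -> W) (C : R) :
  (forall x y, h (x - y) = h x - h y) -> (forall x, `|h x| <= C * `|x|) ->
  forall (u : nat -> W) (x : W), u @ \oo --> x -> (fun k => h (u k)) @ \oo --> h x.
Proof.
move=> hB hb u x Hu; apply: (bound_cvg (C := C) (ncv_dist0 Hu)) => k.
by rewrite -hB.
Qed.
End NormedHelp.

Lemma partA (R : realType) (V : completeNormedModType R)
          (lm : quat R -> V -> V) (rm : V -> quat R -> V)
          (D : set V) (T : V -> V) :
      two_sided_qBanach lm rm ->
      qK rm D T ->
      (exists s : quat R, q_in_S_resolvent D T s) ->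
      forall P : {poly R}, seq_closed_op (@ncv R V) (polyD D T P) (polyf T P).
Proof.
move=> HB [D0 [Dadd [Drm [fadd [frm Tcl]]]]] [s [Rinv [C [HR1 [HR2 Hb]]]]] P.
have rmr : forall (r : R) v, rm v (qreal r) = r *: v.
  by case: HB => _ [_ [_ [_ [_ [_ [_ [H _]]]]]]].
have lin : real_linear_op D T.
  split => //.
  - by move=> c x Dx; rewrite -rmr; apply: Drm.
  - by move=> c x Dx; rewrite -!rmr frm.
have Rdom : forall v, QsD D T (Rinv v) by move=> v; case: (HR1 v).
have RQ : forall v, Qsf T (q0 s) (qnorm2 s) (Rinv v) = v by move=> v; case: (HR1 v).
have RB : forall x y, Rinv (x - y) = Rinv x - Rinv y.
  move=> x y; rewrite (R_add lin Rdom RQ HR2).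
  by rewrite -scaleN1r (R_scale lin Rdom RQ HR2) scaleN1r.
have Rcont : forall (u : nat -> V) (x : V), ncv u x -> ncv (fun k => Rinv (u k)) (Rinv x).
  by move=> u x Hu; apply: (lin_bound_cont RB Hb).
have DR := RD Rdom.
have gD : forall x y, T (Rinv (x + y)) = T (Rinv x) + T (Rinv y).
  by move=> x y; rewrite (R_add lin Rdom RQ HR2) fadd.
have gZ : forall (c : R) x, T (Rinv (c *: x)) = c *: T (Rinv x).
  by move=> c x; rewrite (R_scale lin Rdom RQ HR2) (linfZ lin).
have gcl : forall (u : nat -> V) x y, u @ \oo --> x ->
    ((fun v => T (Rinv v)) \o u) @ \oo --> y -> T (Rinv x) = y.
  move=> u x y Hu Hy.
  by have [_ ->] := Tcl (fun k => Rinv (u k)) (Rinv x) y (fun k => DR _) (Rcont u x Hu) Hy.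
have [M HM] := CGT gD gZ gcl.
have SB : forall x y, T (Rinv (x - y)) = T (Rinv x) - T (Rinv y).
  by move=> x y; rewrite RB (linfB lin).
have Scont : forall (u : nat -> V) (x : V), ncv u x -> ncv (fun k => T (Rinv (u k))) (T (Rinv x)).
  by move=> u x Hu; apply: (lin_bound_cont SB HM).
apply: (core_closed _ _ _ _ lin Rdom RQ HR2 Rcont Scont).
- by move=> u w x y; apply: ncv_add.
- by move=> u x c; apply: ncv_scale.
- by move=> u x y; apply: ncv_uniq.
- exact: ncv_cst0.
Qed.

Section BigHelp.
Variables (R : realType) (W : normedModType R).

Lemma ncv_bigsum (I : Type) (r : seq I) (F : I -> nat -> W) (l : I -> W) :
  (forall i, F i @ \oo --> l i) ->
  (fun k => \sum_(i <- r) F i k) @ \oo --> \sum_(i <- r) l i.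
Proof.
move=> H; elim: r => [|i r IH].
  rewrite big_nil; under eq_fun do rewrite big_nil; exact: cvg_cst.
rewrite big_cons; under eq_fun do rewrite big_cons.
exact: ncv_add.
Qed.
End BigHelp.

Lemma lin_bigsum (R : realType) (W : lmodType R) (DD : set W) (ff : W -> W)
  (lin : real_linear_op DD ff) (I : Type) (r : seq I) (F : I -> W) :
  (forall i, DD (F i)) -> DD (\sum_(i <- r) F i) /\ ff (\sum_(i <- r) F i) = \sum_(i <- r) ff (F i).
Proof.
move=> H; elim: r => [|i r [IH1 IH2]].
  by rewrite !big_nil; split; [apply: (lin0 lin)|apply: (linf0 lin)].
rewrite !big_cons; split; first by apply: (linD lin).
by rewrite (linfD lin) // IH2.
Qed.

Section PartB.
Variables (R : realType) (n : nat) (VR : completeNormedModType R).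
Local Notation cV := {ffun {set 'I_n} -> VR}.
Variables (DT : 'I_n.+1 -> set VR) (fT : 'I_n.+1 -> VR -> VR).
Hypothesis HK : cK DT fT.
Local Notation cc := (@ccv R n VR).

Lemma ffD (x y : cV) A : (x + y) A = x A + y A. Proof. by rewrite ffunE. Qed.
Lemma ffZ (c : R) (x : cV) A : (c *: x) A = c *: x A. Proof. by rewrite ffunE. Qed.
Lemma ff0 A : (0 : cV) A = 0. Proof. by rewrite ffunE. Qed.
Lemma ffB (x y : cV) A : (x - y) A = x A - y A. Proof. by rewrite ffD ffunE. Qed.

Lemma linj j : real_linear_op (DT j) (fT j). Proof. by case: (HK j). Qed.

Lemma linP : real_linear_op (paraD DT) (paraF fT).
Proof.
split.
- by move=> A j; rewrite ff0; apply: (lin0 (linj j)).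
- by move=> x y Dx Dy A j; rewrite ffD; apply: (linD (linj j)).
- by move=> c x Dx A j; rewrite ffZ; apply: (linZ (linj j)).
- move=> x y Dx Dy; apply/ffunP => B; rewrite !ffunE (linfD (linj _)) //.
  rewrite -!addrA; congr (_ + _); rewrite addrCA; congr (_ + _).
  rewrite -big_split /=; apply: eq_bigr => i _.
  by rewrite ffD (linfD (linj _)) // scalerDr.
- move=> c x Dx; apply/ffunP => B; rewrite !ffunE (linfZ (linj _)) //.
  rewrite scalerDr scaler_sumr; congr (_ + _); apply: eq_bigr => i _.
  by rewrite ffZ (linfZ (linj _)) // !scalerA mulrC.
Qed.

Lemma ccv_add (u w : nat -> cV) x y : cc u x -> cc w y -> cc (fun k => u k + w k) (x + y).
Proof.
move=> Hu Hw A; rewrite ffD; under eq_fun do rewrite ffD.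
exact: ncv_add.
Qed.

Lemma ccv_scale (u : nat -> cV) x (c : R) : cc u x -> cc (fun k => c *: u k) (c *: x).
Proof.
move=> Hu A; rewrite ffZ; under eq_fun do rewrite ffZ.
exact: ncv_scale.
Qed.

Lemma ccv_uniq (u : nat -> cV) x y : cc u x -> cc u y -> x = y.
Proof. by move=> Hx Hy; apply/ffunP => A; apply: (ncv_uniq (Hx A) (Hy A)). Qed.

Lemma ccv_cst0 : cc (fun _ => 0) 0.
Proof. by move=> A /=; apply: cvg_cst. Qed.

Lemma comp_le_cnorm (v : cV) A : `|v A| <= @cnorm R n VR v.
Proof.
rewrite /cnorm (bigD1 A) //= lerDl; apply: sumr_ge0 => B _; exact: normr_ge0.
Qed.

Lemma ccv_cnorm (u : nat -> cV) x : cc u x -> (fun k => @cnorm R n VR (x - u k)) @ \oo --> (0 : R).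
Proof.
move=> Hu.
have H : (fun k => \sum_(A : {set 'I_n}) `|x A - u k A|) @ \oo --> \sum_(A : {set 'I_n}) (0:R).
  by apply: ncv_bigsum => A; apply: ncv_dist0.
rewrite big1 // in H.
rewrite /cnorm; under eq_fun do under eq_bigr do rewrite ffB.
exact: H.
Qed.

Definition dlt (C : {set 'I_n}) (x : VR) : cV := [ffun B => if B == C then x else 0].

Lemma dlt_add C x y : dlt C (x + y) = dlt C x + dlt C y.
Proof. by apply/ffunP => B; rewrite ffD !ffunE; case: (B == C); rewrite ?addr0. Qed.

Lemma dlt_scale C (c : R) x : dlt C (c *: x) = c *: dlt C x.
Proof. by apply/ffunP => B; rewrite ffZ !ffunE; case: (B == C); rewrite ?scaler0. Qed.

Lemma dlt_dec (v : cV) : v = \sum_(C : {set 'I_n}) dlt C (v C).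
Proof.
apply/ffunP => A; rewrite sum_ffunE (bigD1 A) //= ffunE eqxx big1 ?addr0 //.
by move=> C' HC; rewrite ffunE; case: eqP => // HA; move: HC; rewrite HA eqxx.
Qed.

Lemma partB_main : (exists (s0 : R) (s : 'I_n -> R), c_in_S_resolvent DT fT s0 s) ->
  forall P : {poly R}, seq_closed_op cc (polyD (paraD DT) (paraF fT) P) (polyf (paraF fT) P).
Proof.
move=> [s0 [s [Rinv [C [HR1 [HR2 Hb]]]]]] P.
have lin := linP.
have Rdom : forall v, QsD (paraD DT) (paraF fT) (Rinv v) by move=> v; case: (HR1 v).
have RQ : forall v, Qsf (paraF fT) s0 (s0 ^+ 2 + \sum_(i < n) s i ^+ 2) (Rinv v) = v.
  by move=> v; case: (HR1 v).
have RA := R_add lin Rdom RQ HR2.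
have RZ := R_scale lin Rdom RQ HR2.
have RB : forall x y, Rinv (x - y) = Rinv x - Rinv y.
  by move=> x y; rewrite RA -scaleN1r RZ scaleN1r.
have Rcont : forall (u : nat -> cV) (x : cV), cc u x -> cc (fun k => Rinv (u k)) (Rinv x).
  move=> u x Hu A; apply: (bound_cvg (C := C) (ccv_cnorm Hu)) => k.
  by rewrite -ffB -RB; apply: le_trans (comp_le_cnorm _ A) _; apply: Hb.
have DRA : forall w A j, DT j (Rinv w A) by move=> w A j; apply: (RD Rdom w).
have R0' : Rinv 0 = 0 by apply: (R0 lin Rdom RQ HR2).
have gcont : forall j A (u : nat -> cV) x, cc u x ->
    (fun k => fT j (Rinv (u k) A)) @ \oo --> fT j (Rinv x A).
  move=> j A u x Hu.
  have hc : forall Cs : {set 'I_n}, forall (w : nat -> VR) y, w @ \oo --> y ->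
      (fun k => fT j (Rinv (dlt Cs (w k)) A)) @ \oo --> fT j (Rinv (dlt Cs y) A).
    move=> Cs.
    have hD : forall x y, fT j (Rinv (dlt Cs (x + y)) A) =
        fT j (Rinv (dlt Cs x) A) + fT j (Rinv (dlt Cs y) A).
      by move=> x1 y1; rewrite dlt_add RA ffD (linfD (linj j)).
    have hZ : forall (c : R) x, fT j (Rinv (dlt Cs (c *: x)) A) = c *: fT j (Rinv (dlt Cs x) A).
      by move=> c x1; rewrite dlt_scale RZ ffZ (linfZ (linj j)).
    have hcl : forall (w : nat -> VR) x y, w @ \oo --> x ->
        ((fun z => fT j (Rinv (dlt Cs z) A)) \o w) @ \oo --> y -> fT j (Rinv (dlt Cs x) A) = y.
      move=> w x1 y1 Hw Hy.
      have Hd : cc (fun k => dlt Cs (w k)) (dlt Cs x1).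
        move=> B; rewrite ffunE; under eq_fun do rewrite ffunE.
        by case: (B == Cs) => //; apply: cvg_cst.
      have HRd := Rcont _ _ Hd A.
      by have [_ ->] := (proj2 (HK j)) (fun k => Rinv (dlt Cs (w k)) A) _ y1 (fun k => DRA _ _ _) HRd Hy.
    have [M HM] := CGT hD hZ hcl.
    have hB : forall x y, fT j (Rinv (dlt Cs (x - y)) A) =
        fT j (Rinv (dlt Cs x) A) - fT j (Rinv (dlt Cs y) A).
      by move=> x1 y1; rewrite hD -scaleN1r hZ scaleN1r.
    by move=> w y Hw; apply: (lin_bound_cont hB HM).
  have dec : forall v : cV, fT j (Rinv v A) = \sum_(Cs : {set 'I_n}) fT j (Rinv (dlt Cs (v Cs)) A).
    move=> v; rewrite {1}(dlt_dec v) (big_morph Rinv RA R0') sum_ffunE.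
    by rewrite (proj2 (lin_bigsum (linj j) _ (fun Cs => DRA _ _ _))).
  rewrite dec; under eq_fun do rewrite dec.
  by apply: ncv_bigsum => Cs; apply: hc; apply: Hu.
have Scont : forall (u : nat -> cV) (x : cV), cc u x ->
    cc (fun k => paraF fT (Rinv (u k))) (paraF fT (Rinv x)).
  move=> u x Hu B; rewrite ffunE; under eq_fun do rewrite ffunE.
  apply: ncv_add; first exact: gcont.
  by apply: ncv_bigsum => i; apply: ncv_scale; apply: gcont.
apply: (core_closed _ _ _ _ lin Rdom RQ HR2 Rcont Scont).
- by move=> u w x y; apply: ccv_add.
- by move=> u x c; apply: ccv_scale.
- by move=> u x y; apply: ccv_uniq.
- exact: ccv_cst0.
Qed.

End PartB.

Theorem mainTheorem11 :
  (* setting (a): quaternionic *)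
  (forall (R : realType) (V : completeNormedModType R)
          (lm : quat R -> V -> V) (rm : V -> quat R -> V)
          (D : set V) (T : V -> V),
      two_sided_qBanach lm rm ->
      qK rm D T ->
      (exists s : quat R, q_in_S_resolvent D T s) ->
      forall P : {poly R}, seq_closed_op (@ncv R V) (polyD D T P) (polyf T P))
  /\
  (* setting (b): Clifford *)
  (forall (R : realType) (n : nat) (VR : completeNormedModType R)
          (DT : 'I_n.+1 -> set VR) (fT : 'I_n.+1 -> VR -> VR),
      cK DT fT ->
      (exists (s0 : R) (s : 'I_n -> R), c_in_S_resolvent DT fT s0 s) ->
      forall P : {poly R},
        seq_closed_op (@ccv R n VR) (polyD (paraD DT) (paraF fT) P)
                                    (polyf (paraF fT) P)).
Proof.
split; first exact: partA.
move=> R n VR DT fT HK Hs P.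
exact: (partB_main HK Hs).
Qed.
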